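(* Let $K$ be a field, $I$ a monomial ideal in $R=K[x_1,\ldots,x_n]$, and $1\le j\le n$. If $I$ has the copersistence property, then the contraction $I/x_j$ has the copersistence property.
   Context: An ideal $I$ in a commutative Noetherian ring $R$ has the copersistence property if $\mathrm{Ass}_R(R/I^k)\supseteq\mathrm{Ass}_R(R/I^{k+1})$ for all $k\ge1$. If $\{u_1,\ldots,u_m\}$ is the minimal monomial generating set of $I$, the contraction $I/x_j$ is the monomial ideal (in the polynomial ring over $K$ in the variables other than $x_j$) generated by the monomials obtained from $u_1,\ldots,u_m$ by setting $x_j=1$. *)

(* Defs.v *)
From HB Require Import structures.
From mathcomp Require Import all_boot all_order all_algebra.
From mathcomp Require Import mpoly.
Set Implicit Arguments. Unset Strict Implicit. Unset Printing Implicit Defensive.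
Import GRing.Theory.
Local Open Scope ring_scope.

Section IdealDefs.
Variables (K : fieldType) (n : nat).
Local Notation R := {mpoly K[n]}.

Definition is_ideal (I : R -> Prop) : Prop :=
  I 0 /\ (forall a b, I a -> I b -> I (a + b)) /\ (forall r a, I a -> I (r * a)).

Definition is_prime_ideal (P : R -> Prop) : Prop :=
  is_ideal P /\ ~ P 1 /\ (forall a b, P (a * b) -> P a \/ P b).

Definition ideal_gen (S : R -> Prop) : R -> Prop := fun f =>
  exists (m : nat) (c g : 'I_m -> R),
    (forall i, S (g i)) /\ f = \sum_(i < m) c i * g i.

Definition ideal_pow (I : R -> Prop) (k : nat) : R -> Prop :=
  ideal_gen (fun f => exists g : 'I_k -> R,
                       (forall i, I (g i)) /\ f = \prod_(i < k) g i).

Definition colon (J : R -> Prop) (f : R) : R -> Prop := fun g => J (g * f).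

(* Ass_R(R/J): primes P equal to an annihilator (J : f) of an element of R/J. *)
Definition Ass (J : R -> Prop) (P : R -> Prop) : Prop :=
  is_prime_ideal P /\ exists f : R, forall g, P g <-> colon J f g.

Definition copersistent (I : R -> Prop) : Prop :=
  forall k : nat, (1 <= k)%N ->
    forall P, Ass (ideal_pow I k.+1) P -> Ass (ideal_pow I k) P.

Definition monomial_ideal (s : seq 'X_{1..n}) : R -> Prop :=
  ideal_gen (fun f => exists2 m, m \in s & f = 'X_[m]).

Definition mdivides (a b : 'X_{1..n}) : bool := [forall i, a i <= b i]%N.

Definition minimal_monomial_gens (I : R -> Prop) (s : seq 'X_{1..n}) : Prop :=
  (forall f, I f <-> monomial_ideal s f) /\ uniq s /\
  (forall a b, a \in s -> b \in s -> mdivides a b -> a = b).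
End IdealDefs.

(* Setting x_j = 1 in a monomial of K[x_0..x_n] gives a monomial in the
   remaining n variables (indexed by lift j). *)
Definition mnm_contract (n : nat) (j : 'I_n.+1) (m : 'X_{1..n.+1}) : 'X_{1..n} :=
  [multinom m (lift j i) | i < n].

(* The contraction I/x_j, computed from the minimal monomial generators s of I. *)
Definition contraction (K : fieldType) (n : nat) (j : 'I_n.+1)
    (s : seq 'X_{1..n.+1}) : {mpoly K[n]} -> Prop :=
  @monomial_ideal K n (map (mnm_contract j) s).

(* Main.v *)
Require Import Defs.
From HB Require Import structures.
From mathcomp Require Import all_boot all_order all_algebra.
From mathcomp Require Import mpoly.
From Stdlib Require Import Classical.
From mathcomp Require Import zify.
Import GRing.Theory.
Local Open Scope ring_scope.
Set Implicit Arguments. Unset Strict Implicit.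
Section Main.
Variables (K : fieldType) (n : nat) (j : 'I_n.+1).
Local Notation S := {mpoly K[n]}.
Local Notation R := {mpoly K[n.+1]}.
Definition hU (i : 'I_n.+1) : {poly S} :=
  if unlift j i is Some i' then ('X_i')%:P else 'X.
Definition U (p : R) : {poly S} := mmap (polyC \o @mpolyC _ _) hU p.
Definition phi (p : S) : R := mmap (@mpolyC _ K) (fun i => 'X_(lift j i)) p.
HB.instance Definition _ := GRing.RMorphism.copy U (mmap (polyC \o @mpolyC _ _) hU).
HB.instance Definition _ := GRing.RMorphism.copy phi (mmap (@mpolyC _ K) (fun i => 'X_(lift j i))).
Lemma UM p q : U (p * q) = U p * U q. Proof. by rewrite /U rmorphM. Qed.
Lemma UD p q : U (p + q) = U p + U q. Proof. by rewrite /U rmorphD. Qed.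
Lemma U1 : U 1 = 1. Proof. by rewrite /U rmorph1. Qed.
Lemma phiM p q : phi (p * q) = phi p * phi q. Proof. by rewrite /phi rmorphM. Qed.
Lemma phiD p q : phi (p + q) = phi p + phi q. Proof. by rewrite /phi rmorphD. Qed.
Lemma UC c : U c%:MP = (c%:MP)%:P. Proof. by rewrite /U mmapC. Qed.
Lemma phiC c : phi c%:MP = c%:MP. Proof. by rewrite /phi mmapC. Qed.
Lemma UX (i : 'I_n.+1) : U 'X_i = hU i.
Proof. by rewrite /U mmapX mmap1U. Qed.
Lemma phiX (i : 'I_n) : phi 'X_i = 'X_(lift j i).
Proof. by rewrite /phi mmapX mmap1U. Qed.
End Main.

Lemma mpoly_hom_eq (K : fieldType) (m : nat) (A : comNzRingType)
  (F G : {mpoly K[m]} -> A) :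
  (forall p q, F (p + q) = F p + F q) -> (forall p q, G (p + q) = G p + G q) ->
  (forall p q, F (p * q) = F p * F q) -> (forall p q, G (p * q) = G p * G q) ->
  (forall c, F c%:MP = G c%:MP) -> (forall i, F 'X_i = G 'X_i) ->
  forall p, F p = G p.
Proof.
move=> FD GD FM GM FC FX p.
pose P := fun x => F x = G x.
have P0 : P 0 by rewrite /P -mpolyC0 FC.
have P1 : P 1 by rewrite /P -mpolyC1 FC.
have PD : forall x y, P x -> P y -> P (x + y) by move=> x y; rewrite /P FD GD => -> ->.
have PM : forall x y, P x -> P y -> P (x * y) by move=> x y; rewrite /P FM GM => -> ->.
rewrite [p]mpolyE; apply: (big_ind P) => // mm _.
rewrite -mul_mpolyC; apply: (PM); first exact: FC.
rewrite mpolyXE_id; apply: (big_ind P) => // i _.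
move: (mm i) => e; elim: e => [|e IH]; first by rewrite expr0.
by rewrite exprS; apply: (PM).
Qed.

Section Main2.
Variables (K : fieldType) (n : nat) (j : 'I_n.+1).
Local Notation S := {mpoly K[n]}.
Local Notation R := {mpoly K[n.+1]}.
Local Notation U := (@U K n j).
Local Notation phi := (@phi K n j).

Lemma Uphi c : U (phi c) = c%:P.
Proof.
apply: (@mpoly_hom_eq K n _ (fun c => U (phi c)) (fun c => c%:P)).
- by move=> p q; rewrite phiD UD.
- by move=> p q; rewrite polyCD.
- by move=> p q; rewrite phiM UM.
- by move=> p q; rewrite polyCM.
- by move=> c'; rewrite phiC UC.
- by move=> i; rewrite phiX UX /hU liftK.
Qed.

Definition T (p : {poly S}) : R := (map_poly phi p).['X_j].

Lemma TU p : T (U p) = p.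
Proof.
apply: (@mpoly_hom_eq K n.+1 _ (fun p => T (U p)) id) => //.
- by move=> p1 q; rewrite /T UD raddfD hornerD.
- by move=> p1 q; rewrite /T UM rmorphM hornerM.
- by move=> c; rewrite /T UC map_polyC hornerC /= phiC.
- move=> i; rewrite /T UX /hU; case: unliftP => [i'|] -> /=.
    by rewrite map_polyC hornerC /= phiX.
  by rewrite map_polyX hornerX.
Qed.
End Main2.
Section Gen.
Variables (K : fieldType) (m : nat).
Implicit Types (S J : {mpoly K[m]} -> Prop).

Lemma gen_in S x : S x -> ideal_gen S x.
Proof.
move=> Sx; exists 1%N, (fun _ => 1), (fun _ => x); split=> //.
by rewrite big_ord1 mul1r.
Qed.

Lemma gen0 S : ideal_gen S 0.
Proof. by exists 0%N, (fun _ => 0), (fun _ => 0); split; [case|rewrite big_ord0]. Qed.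

Lemma genD S a b : ideal_gen S a -> ideal_gen S b -> ideal_gen S (a + b).
Proof.
move=> [m1 [c1 [g1 [Hg1 ->]]]] [m2 [c2 [g2 [Hg2 ->]]]].
exists (m1 + m2)%N, (fun i => match split i with inl x => c1 x | inr y => c2 y end),
  (fun i => match split i with inl x => g1 x | inr y => g2 y end); split.
  by move=> i; case: (split i).
rewrite big_split_ord /=; congr (_ + _); apply: eq_bigr => i _.
  by rewrite (unsplitK (inl _ i)).
by rewrite (unsplitK (inr _ i)).
Qed.

Lemma genM S r a : ideal_gen S a -> ideal_gen S (r * a).
Proof.
move=> [m1 [c1 [g1 [Hg1 ->]]]]; exists m1, (fun i => r * c1 i), g1; split=> //.
by rewrite mulr_sumr; apply: eq_bigr => i _; rewrite mulrA.
Qed.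

Lemma gen_sum S (I : Type) (r : seq I) (P : pred I) (F : I -> {mpoly K[m]}) :
  (forall i, P i -> ideal_gen S (F i)) -> ideal_gen S (\sum_(i <- r | P i) F i).
Proof. move=> H; apply: big_ind => //; [exact: gen0 | exact: genD]. Qed.

Lemma gen_sub S (A : {mpoly K[m]} -> Prop) :
  A 0 -> (forall a b, A a -> A b -> A (a + b)) -> (forall r a, A a -> A (r * a)) ->
  (forall x, S x -> A x) -> forall x, ideal_gen S x -> A x.
Proof.
move=> A0 AD AM SA x [m1 [c1 [g1 [Hg1 ->]]]].
apply: (big_ind A) => // i _; apply: AM; exact: SA.
Qed.

Lemma pow_gen J k (g : 'I_k -> {mpoly K[m]}) :
  (forall i, J (g i)) -> ideal_pow J k (\prod_(i < k) g i).
Proof. by move=> H; apply: gen_in; exists g. Qed.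

Lemma pow_mul J k x y : ideal_pow J k x -> J y -> ideal_pow J k.+1 (x * y).
Proof.
move=> Hx Jy; move: x Hx; apply: gen_sub.
- by rewrite mul0r; apply: gen0.
- by move=> a b Ha Hb; rewrite mulrDl; apply: genD.
- by move=> r a Ha; rewrite -mulrA; apply: genM.
move=> x [g [Hg ->]].
pose g' := fun l : 'I_k.+1 => if unlift ord_max l is Some i then g i else y.
have -> : \prod_(i < k) g i * y = \prod_(l < k.+1) g' l.
  rewrite big_ord_recr /= /g' unlift_none; congr (_ * _); apply: eq_bigr => i _.
  have -> : widen_ord (leqnSn k) i = lift ord_max i by apply: val_inj; rewrite /= /bump leqNgt ltn_ord.
  by rewrite liftK.
by apply: pow_gen => l; rewrite /g'; case: unlift.
Qed.

Lemma gen_ext S S' x : (forall y, S y <-> S' y) -> ideal_gen S x -> ideal_gen S' x.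
Proof. move=> H [m1 [c1 [g1 [Hg1 ->]]]]; exists m1, c1, g1; split=> // i; exact/H. Qed.
End Gen.

Section Prime.
Variables (K : fieldType) (n : nat).
Local Notation S := {mpoly K[n]}.
Variable P : S -> Prop.
Hypothesis HP : is_prime_ideal P.

Lemma P0 : P 0. Proof. by case: HP => [[]]. Qed.
Lemma PD a b : P a -> P b -> P (a + b). Proof. by case: HP => [[_ []]] => H _ _; apply: H. Qed.
Lemma PM r a : P a -> P (r * a). Proof. by case: HP => [[_ []]] => _ H _; apply: H. Qed.
Lemma PMr r a : P a -> P (a * r). Proof. by rewrite mulrC; apply: PM. Qed.
Lemma P1 : ~ P 1. Proof. by case: HP => _ []. Qed.
Lemma Pprime a b : P (a * b) -> P a \/ P b. Proof. by case: HP => _ [] _; apply. Qed.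
Lemma Psum (I : Type) (r : seq I) (Q : pred I) (F : I -> S) :
  (forall i, Q i -> P (F i)) -> P (\sum_(i <- r | Q i) F i).
Proof. move=> H; apply: big_ind => //; [exact: P0 | exact: PD]. Qed.

Lemma min_bad (p : {poly S}) e : ~ P p`_e ->
  exists e0, ~ P p`_e0 /\ forall i, (i < e0)%N -> P p`_i.
Proof.
elim: e {-2}e (leqnn e) => [|N IH] e le H.
  exists e; split=> // i; rewrite leqn0 in le; by rewrite (eqP le).
case: (classic (exists i, (i < e)%N /\ ~ P p`_i)) => [[i [lt Hi]]|nH].
  by apply: (IH i) => //; rewrite -ltnS (leq_trans lt le).
exists e; split=> // i lt; apply: NNPP => Hi; apply: nH; by exists i.
Qed.

Lemma poly_prime (p q : {poly S}) : (forall e, P (p * q)`_e) ->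
  (forall e, P p`_e) \/ (forall e, P q`_e).
Proof.
move=> H; apply: NNPP => nH.
have [e0 He0] : exists e, ~ P p`_e.
  apply: NNPP => nE; apply: nH; left => e; apply: NNPP => ne; apply: nE; by exists e.
have [e1 He1] : exists e, ~ P q`_e.
  apply: NNPP => nE; apply: nH; right => e; apply: NNPP => ne; apply: nE; by exists e.
have [a [Ha Hlta]] := min_bad He0.
have [b [Hb Hltb]] := min_bad He1.
have := H (a + b)%N; rewrite coefM.
have lta : (a < (a + b).+1)%N by rewrite ltnS leq_addr.
rewrite (bigD1 (Ordinal lta)) //= subDnCA // subnn addn0 => Hsum.
have Hrest : P (\sum_(i < (a + b).+1 | i != Ordinal lta) p`_i * q`_(a + b - i)).
  apply: Psum => i ne.
  case: (ltngtP i a) => [lt|gt|eq].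
  - by apply: PMr; apply: Hlta.
  - apply: PM; apply: Hltb.
    by have := ltn_ord i; move: gt; lia.
  - have E : i = Ordinal lta by apply: val_inj; rewrite /= eq.
    by rewrite E eqxx in ne.
have : P (p`_a * q`_b).
  have -> : p`_a * q`_b = (p`_a * q`_b + \sum_(i < (a + b).+1 | i != Ordinal lta) p`_i * q`_(a + b - i))
            + (-1) * \sum_(i < (a + b).+1 | i != Ordinal lta) p`_i * q`_(a + b - i).
    by rewrite mulN1r addrK.
  by apply: PD => //; apply: PM.
by case/Pprime.
Qed.
End Prime.

Section Main3.
Variables (K : fieldType) (n : nat) (j : 'I_n.+1) (s : seq 'X_{1..n.+1}).
Local Notation S := {mpoly K[n]}.
Local Notation R := {mpoly K[n.+1]}.
Local Notation U := (@U K n j).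
Local Notation phi := (@phi K n j).
Local Notation J := (@contraction K n j s).
Local Notation Mons := (@monomial_ideal K n.+1 s).

Lemma UXm (a : 'X_{1..n.+1}) : U 'X_[a] = ('X_[mnm_contract j a])%:P * 'X^(a j).
Proof.
rewrite /U mmapX /mmap1 (bigD1_ord j) //= /hU unlift_none mulrC; congr (_ * _).
rewrite mpolyXE_id rmorph_prod; apply: eq_bigr => i _.
by rewrite liftK rmorphXn /= mnmE.
Qed.

Lemma phiXm (a : 'X_{1..n.+1}) : phi 'X_[mnm_contract j a] * 'X_j ^+ (a j) = 'X_[a].
Proof.
rewrite /phi mmapX /mmap1 [in RHS]mpolyXE_id (bigD1_ord j) //= mulrC; congr (_ * _).
by apply: eq_bigr => i _; rewrite mnmE.
Qed.

Lemma UXj e : U ('X_j ^+ e) = 'X^e.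
Proof. by rewrite rmorphXn /= UX /hU unlift_none. Qed.

Definition Ext (A : S -> Prop) (h : R) := forall e, A ((U h)`_e).

Lemma Ext_gen0 (G : S -> Prop) : Ext (ideal_gen G) 0.
Proof. by move=> e; rewrite /U raddf0 coef0; apply: gen0. Qed.

Lemma Ext_genD (G : S -> Prop) a b :
  Ext (ideal_gen G) a -> Ext (ideal_gen G) b -> Ext (ideal_gen G) (a + b).
Proof. move=> Ha Hb e; rewrite UD coefD. exact: (genD (Ha e) (Hb e)). Qed.

Lemma Ext_genM (G : S -> Prop) r a :
  Ext (ideal_gen G) a -> Ext (ideal_gen G) (r * a).
Proof.
move=> Ha e; rewrite UM coefM; apply: gen_sum => i _; exact: genM.
Qed.

Lemma Ext_sub (G : S -> Prop) (G' : R -> Prop) :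
  (forall x, G' x -> Ext (ideal_gen G) x) ->
  forall x, ideal_gen G' x -> Ext (ideal_gen G) x.
Proof.
move=> H; apply: gen_sub; [exact: Ext_gen0 | exact: Ext_genD | exact: Ext_genM | exact: H].
Qed.

Lemma Ext_Mons x : Mons x -> Ext J x.
Proof.
apply: Ext_sub => _ [a as_ ->] e.
rewrite UXm coefCM coefXn; case: eqP => _.
  by rewrite mulr1; apply: gen_in; exists (mnm_contract j a) => //; apply: map_f.
by rewrite mulr0; apply: gen0.
Qed.

Lemma Ext_powM k a b :
  Ext (ideal_pow J k) a -> Ext J b -> Ext (ideal_pow J k.+1) (a * b).
Proof.
move=> Ha Hb e; rewrite UM coefM; apply: gen_sum => i _; exact: pow_mul.
Qed.

Lemma Ext_one : Ext (ideal_pow J 0) 1.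
Proof.
move=> e; rewrite /U rmorph1 coef1; case: eqP => _.
  by have := @pow_gen K n J 0 (fun _ => 0) (fun i => match i with Ordinal _ p => False_ind _ (notF p) end); rewrite big_ord0.
exact: gen0.
Qed.

Lemma Ext_prod k (g : 'I_k -> R) : (forall i, Mons (g i)) ->
  Ext (ideal_pow J k) (\prod_(i < k) g i).
Proof.
elim: k g => [|k IH] g Hg; first by rewrite big_ord0; apply: Ext_one.
rewrite big_ord_recr /=; apply: Ext_powM; first by apply: IH.
exact: Ext_Mons.
Qed.

Lemma Ext_of_pow (I : R -> Prop) (HI : forall f, I f <-> Mons f) k x :
  ideal_pow I k x -> Ext (ideal_pow J k) x.
Proof.
apply: Ext_sub => _ [g [Hg ->]]; apply: Ext_prod => i; exact/HI.
Qed.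

Lemma Ext_shift (A : S -> Prop) g N : Ext A (g * 'X_j ^+ N) -> Ext A g.
Proof.
move=> H e; have := H (e + N)%N.
by rewrite UM UXj coefMXn ltnNge leq_addl /= addnK.
Qed.

Definition N1 := (\max_(a <- s) a j)%N.

Lemma J_phi x : J x -> Mons (phi x * 'X_j ^+ N1).
Proof.
move: x; apply: gen_sub.
- by rewrite /phi raddf0 mul0r; apply: gen0.
- by move=> a b Ha Hb; rewrite phiD mulrDl; apply: genD.
- by move=> r a Ha; rewrite phiM -mulrA; apply: genM.
move=> _ [b /mapP [a as_ ->] ->].
have le : (a j <= N1)%N by rewrite /N1; apply: leq_bigmax_seq.
rewrite -(subnKC le) exprD mulrA phiXm.
rewrite mulrC; apply: genM; apply: gen_in; by exists a.
Qed.

Lemma pow_phi (I : R -> Prop) (HI : forall f, I f <-> Mons f) k c :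
  ideal_pow J k c -> ideal_pow I k (phi c * 'X_j ^+ (k * N1)).
Proof.
move: c; apply: gen_sub.
- by rewrite /phi raddf0 mul0r; apply: gen0.
- by move=> a b Ha Hb; rewrite phiD mulrDl; apply: genD.
- by move=> r a Ha; rewrite phiM -mulrA; apply: genM.
move=> _ [g [Hg ->]].
have -> : phi (\prod_(i < k) g i) * 'X_j ^+ (k * N1) =
          \prod_(i < k) (phi (g i) * 'X_j ^+ N1).
  rewrite big_split /= prodr_const card_ord -exprM mulnC; congr (_ * _).
  by rewrite /phi rmorph_prod.
by apply: pow_gen => i; apply/HI; apply: J_phi.
Qed.

Lemma Ext_to_pow (I : R -> Prop) (HI : forall f, I f <-> Mons f) k g :
  Ext (ideal_pow J k) g -> ideal_pow I k (g * 'X_j ^+ (k * N1)).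
Proof.
move=> H; rewrite -[g in g * _](@TU K n j) /T.
rewrite horner_coef mulr_suml.
apply: gen_sum => i _; rewrite coef_map /= mulrAC.
rewrite mulrC; apply: genM; apply: (pow_phi HI); exact: H.
Qed.

Lemma Q_prime (P : S -> Prop) (HP : is_prime_ideal P) :
  is_prime_ideal (fun g : R => forall e, P ((U g)`_e)).
Proof.
split; [split; [|split]|split].
- move=> e; rewrite /U raddf0 coef0; exact: (P0 HP).
- move=> a b Ha Hb e; rewrite UD coefD; exact: (PD HP (Ha e) (Hb e)).
- move=> r a Ha e; rewrite UM coefM; apply: (Psum HP) => i _; exact: (PM HP _ (Ha _)).
- move=> H; apply: (P1 HP); have := H 0%N; by rewrite U1 coef1.
- move=> a b H; apply: (poly_prime HP) => e; rewrite -UM; exact: H.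
Qed.
End Main3.

Theorem corollary3p22 (K : fieldType) (n : nat) (j : 'I_n.+1)
    (I : {mpoly K[n.+1]} -> Prop) (s : seq 'X_{1..n.+1}) :
  minimal_monomial_gens I s ->
  copersistent I ->
  copersistent (@contraction K n j s).
Proof.
move=> [HI _] Hcop k hk P [HP [f Hf]].
pose Q := fun g : {mpoly K[n.+1]} => forall e, P ((U j g)`_e).
have HQp : is_prime_ideal Q := Q_prime j HP.
have HQ : forall g, Q g <->
    colon (ideal_pow I k.+1) (phi j f * 'X_j ^+ (k.+1 * N1 j s)) g.
  move=> g; rewrite /colon mulrA; split.
  - move=> Hg; apply: (Ext_to_pow HI) => e; rewrite UM Uphi coefMC.
    exact/Hf/Hg.
  - move=> H e; apply/Hf; have := Ext_shift (Ext_of_pow j HI H) e.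
    by rewrite UM Uphi coefMC.
have [_ [g0 Hg0]] := Hcop k hk Q (conj HQp (ex_intro _ _ HQ)).
have QX : forall N, ~ Q ('X_j ^+ N).
  move=> N H; apply: (P1 HP); have := H N; by rewrite UXj coefXn eqxx.
have Key : forall c, P c <-> forall e, ideal_pow (contraction j s) k (c * (U j g0)`_e).
  move=> c; split.
  - move=> Pc e.
    have Qc : Q (phi j c).
      move=> e'; rewrite Uphi coefC; case: eqP => _ //; exact: (P0 HP).
    have := Ext_of_pow j HI (proj1 (Hg0 _) Qc) e.
    by rewrite UM Uphi coefCM.
  - move=> H.
    have E : Ext j (ideal_pow (contraction j s) k) (phi j c * g0).
      by move=> e; rewrite UM Uphi coefCM.
    have := Ext_to_pow HI E; rewrite mulrAC => H2.
    have := proj2 (Hg0 _) H2.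
    case: HQp => _ [_ Hpr].
    case/Hpr => [Qc|/QX//].
    by have := Qc 0%N; rewrite Uphi coefC eqxx.
set d := U j g0 in Key.
have avoid : forall N, (forall e, (e < N)%N ->
      exists c, ideal_pow (contraction j s) k (c * d`_e) /\ ~ P c) ->
    exists c, ~ P c /\ forall e, (e < N)%N -> ideal_pow (contraction j s) k (c * d`_e).
  elim=> [|N IH] H.
    by exists 1; split=> //; exact: (P1 HP).
  have [c [Hc1 Hc2]] := IH (fun e le => H e (leqW le)).
  have [c' [Hc'1 Hc'2]] := H N (ltnSn N).
  exists (c * c'); split.
    by case/(Pprime HP).
  move=> e; rewrite ltnS leq_eqVlt => /orP [/eqP -> | lt].
    by rewrite -mulrA; apply: genM.
  by rewrite (mulrC c) -mulrA; apply: genM; apply: Hc2.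
case: (classic (exists e, (e < size d)%N /\
          forall c, ideal_pow (contraction j s) k (c * d`_e) -> P c)).
- move=> [e [_ He]]; split=> //; exists d`_e => c; split.
    by move/Key => H; exact: H e.
  exact: He.
- move=> nE; exfalso.
  have Hall : forall e, (e < size d)%N ->
      exists c, ideal_pow (contraction j s) k (c * d`_e) /\ ~ P c.
    move=> e lt; apply: NNPP => nc; apply: nE; exists e; split=> // c' Hc'.
    by apply: NNPP => nP; apply: nc; exists c'.
  have [c [Hc1 Hc2]] := avoid (size d) Hall.
  apply: Hc1; apply/Key => e.
  case: (ltnP e (size d)) => [lt|ge]; first exact: Hc2.
  by rewrite nth_default // mulr0; apply: gen0.
Qed.
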